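(* For every $\Sigma_1$-formula $A$, if $\mathsf{PA}_0\vdash A$ then $\mathsf{HA}_0\vdash A$. Consequently, for every $\Pi_2$-sentence $A$, if $\mathsf{PA}_0\vdash A$ then $\mathsf{HA}_0\vdash A$.
   Context: $\mathsf{HA}_0$ (resp. $\mathsf{PA}_0$) is the theory over intuitionistic (resp. classical) first-order logic with the basic axioms of arithmetic (successor, addition, multiplication, order) and induction restricted to formulas of the form $(D\to E)\to E$ with $D,E$ $\Sigma_1$-formulas. *)

(* Defs.v *)
From Stdlib Require Import List Arith.
Import ListNotations.

Inductive term : Type :=
| tvar : nat -> term
| tzero : term
| tsucc : term -> term
| tplus : term -> term -> term
| tmult : term -> term -> term.

Inductive form : Type :=
| fbot : form
| feq : term -> term -> form
| flt : term -> term -> form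
| fand : form -> form -> form
| f_or : form -> form -> form
| fimp : form -> form -> form
| fall : form -> form
| fex : form -> form.

Definition fneg (A : form) : form := fimp A fbot.
Definition fiff (A B : form) : form := fand (fimp A B) (fimp B A).

Fixpoint ren_term (r : nat -> nat) (t : term) : term :=
  match t with
  | tvar n => tvar (r n)
  | tzero => tzero
  | tsucc t => tsucc (ren_term r t)
  | tplus t u => tplus (ren_term r t) (ren_term r u)
  | tmult t u => tmult (ren_term r t) (ren_term r u)
  end.

Definition shift_term (t : term) : term := ren_term S t.

Definition up (s : nat -> term) : nat -> term :=
  fun n => match n with 0 => tvar 0 | S k => shift_term (s k) end.

Fixpoint subst_term (s : nat -> term) (t : term) : term :=
  match t with
  | tvar n => s n
  | tzero => tzero
  | tsucc t => tsucc (subst_term s t)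
  | tplus t u => tplus (subst_term s t) (subst_term s u)
  | tmult t u => tmult (subst_term s t) (subst_term s u)
  end.

Fixpoint subst (s : nat -> term) (A : form) : form :=
  match A with
  | fbot => fbot
  | feq t u => feq (subst_term s t) (subst_term s u)
  | flt t u => flt (subst_term s t) (subst_term s u)
  | fand A B => fand (subst s A) (subst s B)
  | f_or A B => f_or (subst s A) (subst s B)
  | fimp A B => fimp (subst s A) (subst s B)
  | fall A => fall (subst (up s) A)
  | fex A => fex (subst (up s) A)
  end.

Definition shift (A : form) : form := subst (fun n => tvar (S n)) A.

(* A[t/x_0], lowering the other free variables *)
Definition scons (t : term) (s : nat -> term) : nat -> term :=
  fun n => match n with 0 => t | S k => s k end.
Definition inst (A : form) (t : term) : form := subst (scons t tvar) A.

(* Non-logical axioms [Ax] may contain free variables, which are read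
   universally: every substitution instance of an axiom may be used. *)
Inductive prf (cl : bool) (Ax : form -> Prop) : list form -> form -> Prop :=
| r_hyp G A : In A G -> prf cl Ax G A
| r_ax G A s : Ax A -> prf cl Ax G (subst s A)
| r_impI G A B : prf cl Ax (A :: G) B -> prf cl Ax G (fimp A B)
| r_impE G A B : prf cl Ax G (fimp A B) -> prf cl Ax G A -> prf cl Ax G B
| r_andI G A B : prf cl Ax G A -> prf cl Ax G B -> prf cl Ax G (fand A B)
| r_andE1 G A B : prf cl Ax G (fand A B) -> prf cl Ax G A
| r_andE2 G A B : prf cl Ax G (fand A B) -> prf cl Ax G B
| r_orI1 G A B : prf cl Ax G A -> prf cl Ax G (f_or A B)
| r_orI2 G A B : prf cl Ax G B -> prf cl Ax G (f_or A B)
| r_orE G A B C : prf cl Ax G (f_or A B) -> prf cl Ax (A :: G) C ->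
    prf cl Ax (B :: G) C -> prf cl Ax G C
| r_botE G A : prf cl Ax G fbot -> prf cl Ax G A
| r_allI G A : prf cl Ax (map shift G) A -> prf cl Ax G (fall A)
| r_allE G A t : prf cl Ax G (fall A) -> prf cl Ax G (inst A t)
| r_exI G A t : prf cl Ax G (inst A t) -> prf cl Ax G (fex A)
| r_exE G A B : prf cl Ax G (fex A) -> prf cl Ax (A :: map shift G) (shift B) ->
    prf cl Ax G B
| r_eqrefl G t : prf cl Ax G (feq t t)
| r_eqelim G A s t : prf cl Ax G (feq s t) -> prf cl Ax G (inst A s) ->
    prf cl Ax G (inst A t)
| r_dne G A : cl = true -> prf cl Ax G (fneg (fneg A)) -> prf cl Ax G A.

(* bounded quantifiers: forall x < t. A  and  exists x < t. A
   (t must not mention the bound variable, hence shift_term) *)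
Inductive delta0 : form -> Prop :=
| d0_bot : delta0 fbot
| d0_eq t u : delta0 (feq t u)
| d0_lt t u : delta0 (flt t u)
| d0_and A B : delta0 A -> delta0 B -> delta0 (fand A B)
| d0_or A B : delta0 A -> delta0 B -> delta0 (f_or A B)
| d0_imp A B : delta0 A -> delta0 B -> delta0 (fimp A B)
| d0_ball t A : delta0 A -> delta0 (fall (fimp (flt (tvar 0) (shift_term t)) A))
| d0_bex t A : delta0 A -> delta0 (fex (fand (flt (tvar 0) (shift_term t)) A)).

Inductive sigma1 : form -> Prop :=
| s1_d0 A : delta0 A -> sigma1 A
| s1_ex A : sigma1 A -> sigma1 (fex A).

Inductive pi2 : form -> Prop :=
| p2_s1 A : sigma1 A -> pi2 A
| p2_all A : pi2 A -> pi2 (fall A).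

Fixpoint term_fv_lt (n : nat) (t : term) : Prop :=
  match t with
  | tvar k => k < n
  | tzero => True
  | tsucc t => term_fv_lt n t
  | tplus t u | tmult t u => term_fv_lt n t /\ term_fv_lt n u
  end.

Fixpoint form_fv_lt (n : nat) (A : form) : Prop :=
  match A with
  | fbot => True
  | feq t u | flt t u => term_fv_lt n t /\ term_fv_lt n u
  | fand A B | f_or A B | fimp A B => form_fv_lt n A /\ form_fv_lt n B
  | fall A | fex A => form_fv_lt (S n) A
  end.

Definition sentence (A : form) : Prop := form_fv_lt 0 A.

Definition vx := tvar 0.
Definition vy := tvar 1.

Inductive basic_ax : form -> Prop :=
| ax_succ0 : basic_ax (fneg (feq (tsucc vx) tzero))
| ax_succinj : basic_ax (fimp (feq (tsucc vx) (tsucc vy)) (feq vx vy))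
| ax_plus0 : basic_ax (feq (tplus vx tzero) vx)
| ax_plusS : basic_ax (feq (tplus vx (tsucc vy)) (tsucc (tplus vx vy)))
| ax_mult0 : basic_ax (feq (tmult vx tzero) tzero)
| ax_multS : basic_ax (feq (tmult vx (tsucc vy)) (tplus (tmult vx vy) vx))
| ax_lt0 : basic_ax (fneg (flt vx tzero))
| ax_ltS : basic_ax (fiff (flt vx (tsucc vy)) (f_or (flt vx vy) (feq vx vy))).

(* induction axiom for F, with var 0 as the induction variable and the
   other free variables as parameters:
   F(0) /\ forall x (F(x) -> F(Sx)) -> forall x F(x) *)
Definition ind_ax (F : form) : form :=
  fimp (fand (inst F tzero)
             (fall (fimp F (subst (scons (tsucc (tvar 0)) (fun k => tvar (S k))) F))))
       (fall F).

Inductive HA0_ax : form -> Prop :=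
| ha0_basic A : basic_ax A -> HA0_ax A
| ha0_ind D E : sigma1 D -> sigma1 E -> HA0_ax (ind_ax (fimp (fimp D E) E)).

Definition HA0_proves (A : form) : Prop := prf false HA0_ax [] A.
Definition PA0_proves (A : form) : Prop := prf true HA0_ax [] A.

(* Main.v *)
Require Import Defs.
From Stdlib Require Import List Arith.
Import ListNotations.

Ltac hy := apply r_hyp; simpl; intuition.

Definition sh : nat -> term := fun n => tvar (S n).

Lemma ren_term_subst r t : ren_term r t = subst_term (fun n => tvar (r n)) t.
Proof. induction t; simpl; congruence. Qed.

Lemma subst_term_ext s s' t : (forall n, s n = s' n) -> subst_term s t = subst_term s' t.
Proof. intros H; induction t; simpl; congruence. Qed.

Lemma subst_term_comp s1 s2 t :
  subst_term s2 (subst_term s1 t) = subst_term (fun n => subst_term s2 (s1 n)) t.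
Proof. induction t; simpl; congruence. Qed.

Lemma shift_term_subst t : shift_term t = subst_term sh t.
Proof. unfold shift_term. apply ren_term_subst. Qed.

Lemma subst_term_shift s t : subst_term s (shift_term t) = subst_term (fun n => s (S n)) t.
Proof. rewrite shift_term_subst, subst_term_comp. reflexivity. Qed.

Lemma shift_subst_term s t : shift_term (subst_term s t) = subst_term (fun n => shift_term (s n)) t.
Proof. rewrite shift_term_subst, subst_term_comp. apply subst_term_ext; intro; now rewrite shift_term_subst. Qed.

Lemma subst_term_id t : subst_term tvar t = t.
Proof. induction t; simpl; congruence. Qed.

Lemma subst_term_ext_id s t : (forall n, s n = tvar n) -> subst_term s t = t.
Proof. intros H; rewrite (subst_term_ext s tvar); [apply subst_term_id|exact H]. Qed.

Lemma up_ext s s' : (forall n, s n = s' n) -> forall n, up s n = up s' n.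
Proof. intros H [|n]; simpl; [reflexivity| now rewrite H]. Qed.

Lemma subst_ext A : forall s s', (forall n, s n = s' n) -> subst s A = subst s' A.
Proof.
  induction A; intros s s' H; simpl;
  try (f_equal; auto using subst_term_ext; fail);
  f_equal; apply IHA; apply up_ext; exact H.
Qed.

Lemma up_comp s1 s2 n :
  subst_term (up s2) (up s1 n) = up (fun n => subst_term s2 (s1 n)) n.
Proof.
  destruct n; simpl; [reflexivity|].
  rewrite subst_term_shift, shift_subst_term. reflexivity.
Qed.

Lemma subst_comp A : forall s1 s2,
  subst s2 (subst s1 A) = subst (fun n => subst_term s2 (s1 n)) A.
Proof.
  induction A; intros s1 s2; simpl;
  try (f_equal; auto using subst_term_comp; fail);
  f_equal; rewrite IHA; apply subst_ext; apply up_comp.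
Qed.

Lemma up_id n : up tvar n = tvar n.
Proof. destruct n; reflexivity. Qed.

Lemma subst_ext_id A : forall s, (forall n, s n = tvar n) -> subst s A = A.
Proof.
  induction A; intros s H; simpl;
  try (f_equal; auto using subst_term_ext_id; fail);
  f_equal; apply IHA; intros [|n]; simpl; try reflexivity; rewrite H; reflexivity.
Qed.

Lemma subst_id A : subst tvar A = A.
Proof. apply subst_ext_id; reflexivity. Qed.

Lemma up_shift_comm s A : subst (up s) (shift A) = shift (subst s A).
Proof.
  unfold shift. rewrite !subst_comp. apply subst_ext. intro n. simpl.
  rewrite shift_term_subst. reflexivity.
Qed.

Lemma up_shift_term s t : subst_term (up s) (shift_term t) = shift_term (subst_term s t).
Proof. rewrite subst_term_shift, shift_subst_term. reflexivity. Qed.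

Lemma inst_shift A t : inst (shift A) t = A.
Proof. unfold inst, shift. rewrite subst_comp. apply subst_ext_id. reflexivity. Qed.

Lemma inst_shift_term t u : subst_term (scons u tvar) (shift_term t) = t.
Proof. rewrite subst_term_shift. apply subst_term_ext_id. reflexivity. Qed.

Lemma inst_up_sh A : inst (subst (up sh) A) (tvar 0) = A.
Proof.
  unfold inst. rewrite subst_comp. apply subst_ext_id. intros [|n]; reflexivity.
Qed.

Lemma subst_inst s A t : subst s (inst A t) = inst (subst (up s) A) (subst_term s t).
Proof.
  unfold inst. rewrite !subst_comp. apply subst_ext. intros [|n]; simpl; try reflexivity.
  rewrite inst_shift_term. reflexivity.
Qed.

Lemma incl_cc {T} (a : T) G G' : incl G G' -> incl (a :: G) (a :: G').
Proof. intros H x [->|Hx]; [left; auto| right; auto]. Qed.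

Lemma weaken cl Ax G A : prf cl Ax G A -> forall G', incl G G' -> prf cl Ax G' A.
Proof.
  induction 1; intros G' Hi.
  - apply r_hyp; auto.
  - apply r_ax; auto.
  - apply r_impI; apply IHprf; apply incl_cc; auto.
  - eapply r_impE; eauto.
  - apply r_andI; auto.
  - eapply r_andE1; eauto.
  - eapply r_andE2; eauto.
  - apply r_orI1; auto.
  - apply r_orI2; auto.
  - eapply r_orE; [eauto| apply IHprf2 | apply IHprf3]; apply incl_cc; auto.
  - apply r_botE; auto.
  - apply r_allI; apply IHprf; apply incl_map; auto.
  - apply r_allE; auto.
  - eapply r_exI; eauto.
  - eapply r_exE; [eauto|]. apply IHprf2.
    apply incl_cc. apply incl_map; auto.
  - apply r_eqrefl.
  - eapply r_eqelim; eauto.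
  - apply r_dne; auto.
Qed.

Lemma map_shift_subst s G : map (subst (up s)) (map shift G) = map shift (map (subst s) G).
Proof. rewrite !map_map. apply map_ext. intro; apply up_shift_comm. Qed.

Lemma prf_subst cl Ax G A : prf cl Ax G A -> forall s, prf cl Ax (map (subst s) G) (subst s A).
Proof.
  induction 1; intros s'.
  - apply r_hyp; apply in_map; auto.
  - rewrite subst_comp. apply r_ax; auto.
  - simpl. apply r_impI. apply (IHprf s').
  - simpl in *. eapply r_impE; eauto.
  - simpl. apply r_andI; auto.
  - eapply r_andE1; apply (IHprf s').
  - eapply r_andE2; apply (IHprf s').
  - apply r_orI1; auto.
  - apply r_orI2; auto.
  - eapply r_orE; [apply (IHprf1 s')| apply (IHprf2 s') | apply (IHprf3 s')].
  - apply r_botE; apply (IHprf s').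
  - simpl. apply r_allI. rewrite <- map_shift_subst. apply IHprf.
  - rewrite subst_inst. apply r_allE. apply (IHprf s').
  - simpl. eapply r_exI. rewrite <- subst_inst. apply IHprf.
  - eapply r_exE; [apply (IHprf1 s')|]. simpl.
    rewrite <- map_shift_subst, <- up_shift_comm. apply (IHprf2 (up s')).
  - apply r_eqrefl.
  - rewrite subst_inst. eapply r_eqelim; [apply (IHprf1 s')|].
    rewrite <- subst_inst. apply IHprf2.
  - apply r_dne; auto.
Qed.

Definition pv := prf false HA0_ax.

Lemma use_open G s X : pv [] X -> pv G (subst s X).
Proof. intros H. eapply weaken; [apply (prf_subst _ _ _ _ H s)|]. intros x []. Qed.
Lemma use_closed G X : pv [] X -> pv G X.
Proof. intros H. eapply weaken; eauto. intros x []. Qed.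

Lemma shift_pv G X : pv G X -> pv (map shift G) (shift X).
Proof. intros H. apply (prf_subst _ _ _ _ H sh). Qed.

Lemma allE0 G X : pv G (shift (fall X)) -> pv G X.
Proof. intros H. rewrite <- (inst_up_sh X). apply r_allE. exact H. Qed.

Lemma exI0 G X : pv G X -> pv G (shift (fex X)).
Proof. intros H. simpl. eapply r_exI. rewrite inst_up_sh. exact H. Qed.

Lemma all_gen G X : pv G (fall X) -> pv (map shift G) X.
Proof. intros H. apply allE0. apply shift_pv. exact H. Qed.

Lemma hyp0 G A : pv (A :: G) A.
Proof. apply r_hyp; left; auto. Qed.
Lemma hyp1 G A B : pv (B :: A :: G) A.
Proof. apply r_hyp; right; left; auto. Qed.
Lemma hyp2 G A B C : pv (C :: B :: A :: G) A.
Proof. apply r_hyp; right; right; left; auto. Qed.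
Lemma hyp3 G A B C D : pv (D :: C :: B :: A :: G) A.
Proof. apply r_hyp; right; right; right; left; auto. Qed.
Lemma wk G A B : pv G A -> pv (B :: G) A.
Proof. intros H; eapply weaken; eauto. intros x Hx; right; auto. Qed.
Lemma mp G A B : pv G (fimp A B) -> pv G A -> pv G B.
Proof. apply r_impE. Qed.
Lemma mpc G A B : pv [] (fimp A B) -> pv G A -> pv G B.
Proof. intros H; apply mp, use_closed, H. Qed.
Lemma botE G A : pv G fbot -> pv G A.
Proof. apply r_botE. Qed.
Lemma orE G A B C : pv G (f_or A B) -> pv (A :: G) C -> pv (B :: G) C -> pv G C.
Proof. apply r_orE. Qed.
Lemma impI G A B : pv (A :: G) B -> pv G (fimp A B).
Proof. apply r_impI. Qed.
Lemma impI' A B : (forall G, pv G A -> pv G B) -> pv [] (fimp A B).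
Proof. intros H. apply impI, H, hyp0. Qed.
Lemma ax_inst G A s : HA0_ax A -> pv G (subst s A).
Proof. intros H; apply r_ax; exact H. Qed.

Definition sS : nat -> term := scons (tsucc (tvar 0)) (fun k => tvar (S k)).

Lemma ind_rule G F : sigma1 F -> pv G (inst F tzero) ->
  pv (map shift G) (fimp F (subst sS F)) -> pv G (fall F).
Proof.
  intros HF H0 HS.
  pose proof (ax_inst G _ tvar (ha0_ind fbot F (s1_d0 _ d0_bot) HF)) as Hax.
  rewrite subst_id in Hax. unfold ind_ax in Hax.
  assert (H1 : pv G (fall (fimp (fimp fbot F) F))).
  { eapply mp; [exact Hax|]. apply r_andI.
    - change (pv G (fimp (fimp fbot (inst F tzero)) (inst F tzero))).
      apply impI, wk, H0.
    - apply r_allI. change (pv (map shift G) (fimp (fimp (fimp fbot F) F)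
          (fimp (fimp fbot (subst sS F)) (subst sS F)))).
      apply impI, impI. eapply mp; [apply wk, wk, HS|].
      eapply mp; [apply hyp1| apply impI, botE, hyp0]. }
  apply r_allI. apply all_gen in H1. eapply mp; [exact H1|]. apply impI, botE, hyp0.
Qed.

Lemma eq_sym G a b : pv G (feq a b) -> pv G (feq b a).
Proof.
  intros H. assert (E: forall u, inst (feq (tvar 0) (shift_term a)) u = feq u a).
  { intro u. unfold inst. simpl. rewrite inst_shift_term. reflexivity. }
  rewrite <- E. eapply r_eqelim; [exact H|]. rewrite E. apply r_eqrefl.
Qed.

Lemma eq_S G a b : pv G (feq a b) -> pv G (feq (tsucc a) (tsucc b)).
Proof.
  intros H. assert (E: forall u, inst (feq (tsucc (shift_term a)) (tsucc (tvar 0))) u = feq (tsucc a) (tsucc u)).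
  { intro u. unfold inst. simpl. rewrite inst_shift_term. reflexivity. }
  rewrite <- E. eapply r_eqelim; [exact H|]. rewrite E. apply r_eqrefl.
Qed.

Lemma lt_eq_l G a b c : pv G (feq a b) -> pv G (flt a c) -> pv G (flt b c).
Proof.
  intros H H'. assert (E: forall u, inst (flt (tvar 0) (shift_term c)) u = flt u c).
  { intro u. unfold inst. simpl. rewrite inst_shift_term. reflexivity. }
  rewrite <- E. eapply r_eqelim; [exact H|]. rewrite E. exact H'.
Qed.

Lemma lt_eq_r G a b c : pv G (feq a b) -> pv G (flt c a) -> pv G (flt c b).
Proof.
  intros H H'. assert (E: forall u, inst (flt (shift_term c) (tvar 0)) u = flt c u).
  { intro u. unfold inst. simpl. rewrite inst_shift_term. reflexivity. }
  rewrite <- E. eapply r_eqelim; [exact H|]. rewrite E. exact H'.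
Qed.

Lemma ltS_elim G a b : pv G (flt a (tsucc b)) -> pv G (f_or (flt a b) (feq a b)).
Proof.
  intros H. pose proof (ax_inst G _ (scons a (scons b tvar)) (ha0_basic _ ax_ltS)) as Hx.
  simpl in Hx. eapply mp; [eapply r_andE1; exact Hx| exact H].
Qed.

Lemma ltS_intro G a b : pv G (f_or (flt a b) (feq a b)) -> pv G (flt a (tsucc b)).
Proof.
  intros H. pose proof (ax_inst G _ (scons a (scons b tvar)) (ha0_basic _ ax_ltS)) as Hx.
  simpl in Hx. eapply mp; [eapply r_andE2; exact Hx| exact H].
Qed.

Lemma lt_S_l G a b : pv G (flt a b) -> pv G (flt a (tsucc b)).
Proof. intros H; apply ltS_intro, r_orI1, H. Qed.
Lemma lt_S_eq G a b : pv G (feq a b) -> pv G (flt a (tsucc b)).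
Proof. intros H; apply ltS_intro, r_orI2, H. Qed.
Lemma lt_succ G a : pv G (flt a (tsucc a)).
Proof. apply lt_S_eq, r_eqrefl. Qed.

Lemma lt0 G a C : pv G (flt a tzero) -> pv G C.
Proof.
  intros H. pose proof (ax_inst G _ (scons a tvar) (ha0_basic _ ax_lt0)) as Hx.
  simpl in Hx. apply botE. eapply mp; [exact Hx| exact H].
Qed.

Ltac d0 := repeat first [apply s1_d0 | constructor].

Lemma T1_open : pv [] (fimp (flt (tvar 1) (tvar 0))
   (f_or (flt (tsucc (tvar 1)) (tvar 0)) (feq (tsucc (tvar 1)) (tvar 0)))).
Proof.
  apply (allE0 [] _). apply (shift_pv [] (fall _)).
  apply ind_rule; [d0| |].
  - simpl. apply impI. eapply lt0. apply hyp0.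
  - simpl. apply impI, impI. eapply orE; [apply ltS_elim, hyp0| |].
    + eapply orE; [eapply mp; [apply hyp2|apply hyp0]| |].
      * apply r_orI1, lt_S_l, hyp0.
      * apply r_orI1, lt_S_eq, hyp0.
    + apply r_orI2, eq_S, hyp0.
Qed.

Lemma T1 G a b : pv G (flt a b) -> pv G (f_or (flt (tsucc a) b) (feq (tsucc a) b)).
Proof.
  intros H. pose proof (use_open G (scons b (scons a tvar)) _ T1_open) as Hx.
  simpl in Hx. eapply mp; eauto.
Qed.

Lemma Z_open : pv [] (f_or (flt tzero (tvar 0)) (feq tzero (tvar 0))).
Proof.
  apply (allE0 [] _). apply (shift_pv [] (fall _)).
  apply ind_rule; [d0| |].
  - simpl. apply r_orI2, r_eqrefl.
  - simpl. apply impI. eapply orE; [apply hyp0| |].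
    + apply r_orI1, lt_S_l, hyp0.
    + apply r_orI1, lt_S_eq, hyp0.
Qed.

Lemma T2_open : pv [] (f_or (flt (tvar 0) (tvar 1)) (f_or (feq (tvar 0) (tvar 1)) (flt (tvar 1) (tvar 0)))).
Proof.
  apply (allE0 [] _). apply (shift_pv [] (fall _)).
  apply ind_rule; [d0| |].
  - simpl. pose proof (use_open [] tvar _ Z_open) as Hz. simpl in Hz.
    eapply orE; [exact Hz| |].
    + apply r_orI1, hyp0.
    + apply r_orI2, r_orI1, hyp0.
  - simpl. apply impI. eapply orE; [apply hyp0| |].
    + eapply orE; [apply T1, hyp0| |].
      * apply r_orI1, hyp0.
      * apply r_orI2, r_orI1, hyp0.
    + eapply orE; [apply hyp0| |].
      * apply r_orI2, r_orI2. eapply lt_eq_l; [apply hyp0| apply lt_succ].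
      * apply r_orI2, r_orI2, lt_S_l, hyp0.
Qed.

Lemma T6_open : pv [] (fimp (flt (tsucc (tvar 1)) (tvar 0)) (flt (tvar 1) (tvar 0))).
Proof.
  apply (allE0 [] _). apply (shift_pv [] (fall _)).
  apply ind_rule; [d0| |].
  - simpl. apply impI. eapply lt0, hyp0.
  - simpl. apply impI, impI. eapply orE; [apply ltS_elim, hyp0| |].
    + apply lt_S_l. eapply mp; [apply hyp2| apply hyp0].
    + apply lt_S_l. eapply lt_eq_r; [apply hyp0| apply lt_succ].
Qed.

Lemma T6 G a b : pv G (flt (tsucc a) b) -> pv G (flt a b).
Proof.
  intros H. pose proof (use_open G (scons b (scons a tvar)) _ T6_open) as Hx.
  simpl in Hx. eapply mp; eauto.
Qed.

Lemma T5 G a b : pv G (flt (tsucc a) (tsucc b)) -> pv G (flt a b).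
Proof.
  intros H. eapply orE; [apply ltS_elim, H| |].
  - apply T6, hyp0.
  - eapply lt_eq_r; [apply hyp0| apply lt_succ].
Qed.

Lemma T4_open : pv [] (fimp (flt (tvar 0) (tvar 0)) fbot).
Proof.
  apply (allE0 [] _). apply (shift_pv [] (fall _)).
  apply ind_rule; [d0| |].
  - simpl. apply impI. eapply lt0, hyp0.
  - simpl. apply impI, impI. eapply mp; [apply hyp1| apply T5, hyp0].
Qed.

Lemma T4 G a C : pv G (flt a a) -> pv G C.
Proof.
  intros H. pose proof (use_open G (scons a tvar) _ T4_open) as Hx.
  simpl in Hx. apply botE. eapply mp; eauto.
Qed.

Lemma T3_open : pv [] (fimp (flt (tvar 1) (tvar 2)) (fimp (flt (tvar 2) (tvar 0)) (flt (tvar 1) (tvar 0)))).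
Proof.
  apply (allE0 [] _). apply (shift_pv [] (fall _)).
  apply ind_rule; [d0| |].
  - simpl. apply impI, impI. eapply lt0, hyp0.
  - simpl. apply impI, impI, impI. eapply orE; [apply ltS_elim, hyp0| |].
    + apply lt_S_l. eapply mp; [eapply mp; [apply r_hyp; simpl; tauto| apply r_hyp; simpl; tauto]|apply hyp0].
    + apply lt_S_l. eapply lt_eq_r; [apply hyp0| apply hyp2].
Qed.

Lemma T3 G a b c : pv G (flt a b) -> pv G (flt b c) -> pv G (flt a c).
Proof.
  intros H H'. pose proof (use_open G (scons c (scons a (scons b tvar))) _ T3_open) as Hx.
  simpl in Hx. eapply mp; [eapply mp|]; eauto.
Qed.

Lemma trich G a b : pv G (f_or (flt a b) (f_or (feq a b) (flt b a))).
Proof. pose proof (use_open G (scons a (scons b tvar)) _ T2_open) as Hx. simpl in Hx. exact Hx. Qed.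

Lemma dec_eq G a b : pv G (f_or (feq a b) (fimp (feq a b) fbot)).
Proof.
  eapply orE; [apply trich| |].
  - apply r_orI2, impI. eapply T4. eapply lt_eq_r; [apply eq_sym, hyp0| apply hyp1].
  - eapply orE; [apply hyp0| |].
    + apply r_orI1, hyp0.
    + apply r_orI2, impI. eapply T4. eapply lt_eq_r; [apply hyp0| apply hyp1].
Qed.

Lemma dec_lt G a b : pv G (f_or (flt a b) (fimp (flt a b) fbot)).
Proof.
  eapply orE; [apply trich| |].
  - apply r_orI1, hyp0.
  - eapply orE; [apply hyp0| |].
    + apply r_orI2, impI. eapply T4. eapply lt_eq_r; [apply eq_sym, hyp1| apply hyp0].
    + apply r_orI2, impI. eapply T4. eapply T3; [apply hyp0| apply hyp1].
Qed.


Lemma delta0_subst A : delta0 A -> forall s, delta0 (subst s A).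
Proof.
  induction 1; intro s; simpl; try (constructor; auto; fail).
  - rewrite up_shift_term. apply d0_ball. auto.
  - rewrite up_shift_term. apply d0_bex. auto.
Qed.

Lemma sigma1_subst A : sigma1 A -> forall s, sigma1 (subst s A).
Proof.
  induction 1; intro s; simpl.
  - apply s1_d0, delta0_subst; auto.
  - apply s1_ex; auto.
Qed.

Lemma E1 t A : subst (up (scons t tvar)) (subst (up sh) A) = A.
Proof. rewrite subst_comp. apply subst_ext_id. intros [|n]; reflexivity. Qed.
Lemma E2 A : subst (up sS) (subst (up sh) A) = subst (up sh) A.
Proof. rewrite subst_comp. apply subst_ext. intros [|n]; reflexivity. Qed.

Definition Qf A := subst (scons (tvar 0) (fun k => tvar (S (S (S k))))) A.
Lemma Qf0 A : inst (Qf A) (tvar 0) = subst (up sh) A.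
Proof. unfold inst, Qf. rewrite subst_comp. apply subst_ext. intros [|n]; reflexivity. Qed.
Lemma Qf1 A : inst (Qf A) (tvar 1) = shift A.
Proof. unfold inst, Qf, shift. rewrite subst_comp. apply subst_ext. intros [|n]; reflexivity. Qed.

Lemma bounded_open A : delta0 A -> pv [] (f_or A (fimp A fbot)) ->
  pv [] (fall (f_or (fall (fimp (flt (tvar 0) (tvar 1)) (subst (up sh) A)))
                    (fex (fand (flt (tvar 0) (tvar 1)) (fimp (subst (up sh) A) fbot))))).
Proof.
  intros HA Hd. set (A2 := subst (up sh) A).
  apply ind_rule.
  - subst A2. apply s1_d0. apply d0_or.
    + apply (d0_ball (tvar 0)). apply delta0_subst; auto.
    + apply (d0_bex (tvar 0)). constructor; [apply delta0_subst; auto| constructor].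
  - unfold inst. simpl. subst A2. rewrite E1. apply r_orI1. apply r_allI. simpl.
    apply impI. eapply lt0. apply hyp0.
  - simpl. subst A2. rewrite E2. set (A2 := subst (up sh) A).
    apply impI. eapply orE; [apply hyp0| |].
    + eapply orE; [apply use_closed, Hd| |].
      * apply r_orI1. apply r_allI. apply impI. eapply orE; [apply ltS_elim, hyp0| |].
        -- eapply mp; [| apply hyp0]. apply (allE0 _ (fimp (flt (tvar 0) (tvar 1)) A2)). hy.
        -- subst A2. rewrite <- Qf0. eapply r_eqelim; [apply eq_sym, hyp0|]. rewrite Qf1. hy.
      * apply r_orI2. eapply r_exI with (t := tvar 0).
        subst A2. unfold inst. simpl. pose proof (inst_up_sh A) as HH. unfold inst in HH. rewrite HH.
        apply r_andI; [apply lt_succ| apply hyp0].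
    + apply r_orI2. eapply r_exE; [apply hyp0|]. apply exI0.
      apply r_andI; [apply lt_S_l; eapply r_andE1; apply hyp0| eapply r_andE2; apply hyp0].
Qed.

Lemma bounded A t : delta0 A -> pv [] (f_or A (fimp A fbot)) ->
  pv [] (f_or (fall (fimp (flt (tvar 0) (shift_term t)) A))
              (fex (fand (flt (tvar 0) (shift_term t)) (fimp A fbot)))).
Proof.
  intros HA Hd. pose proof (r_allE _ _ _ _ t (bounded_open A HA Hd)) as H.
  unfold inst in H. simpl in H. rewrite E1 in H. exact H.
Qed.


Lemma dec0 A : delta0 A -> pv [] (f_or A (fimp A fbot)).
Proof.
  induction 1.
  - apply r_orI2, impI, hyp0.
  - apply dec_eq.
  - apply dec_lt.
  - eapply orE; [exact IHdelta0_1| |]; (eapply orE; [apply use_closed, IHdelta0_2| |]).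
    + apply r_orI1, r_andI; [apply hyp1| apply hyp0].
    + apply r_orI2, impI. eapply mp; [apply hyp1| eapply r_andE2, hyp0].
    + apply r_orI2, impI. eapply mp; [apply hyp2| eapply r_andE1, hyp0].
    + apply r_orI2, impI. eapply mp; [apply hyp2| eapply r_andE1, hyp0].
  - eapply orE; [exact IHdelta0_1| |]; (eapply orE; [apply use_closed, IHdelta0_2| |]).
    + apply r_orI1, r_orI1, hyp1.
    + apply r_orI1, r_orI1, hyp1.
    + apply r_orI1, r_orI2, hyp0.
    + apply r_orI2, impI. eapply orE; [apply hyp0| |].
      * eapply mp; [apply hyp3| apply hyp0].
      * eapply mp; [apply hyp2| apply hyp0].
  - eapply orE; [exact IHdelta0_1| |]; (eapply orE; [apply use_closed, IHdelta0_2| |]).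
    + apply r_orI1, impI, hyp1.
    + apply r_orI2, impI. eapply mp; [apply hyp1| eapply mp; [apply hyp0| apply hyp2]].
    + apply r_orI1, impI, hyp1.
    + apply r_orI1, impI, botE. eapply mp; [apply hyp2| apply hyp0].
  - eapply orE; [apply bounded; [exact H| exact IHdelta0]| |].
    + apply r_orI1, hyp0.
    + apply r_orI2, impI. eapply r_exE; [apply hyp1|].
      eapply mp; [eapply r_andE2, hyp0|]. eapply mp.
      * apply (allE0 _ (fimp (flt (tvar 0) (shift_term t)) A)). hy.
      * eapply r_andE1, hyp0.
  - assert (HdN : pv [] (f_or (fimp A fbot) (fimp (fimp A fbot) fbot))).
    { eapply orE; [exact IHdelta0| |].
      - apply r_orI2, impI. eapply mp; [apply hyp0| apply hyp1].
      - apply r_orI1, hyp0. }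
    eapply orE; [apply bounded; [constructor; [exact H| constructor]| exact HdN]| |].
    + apply r_orI2, impI. eapply r_exE; [apply hyp0|].
      eapply mp; [| eapply r_andE2, hyp0]. eapply mp.
      * apply (allE0 _ (fimp (flt (tvar 0) (shift_term t)) (fimp A fbot))). hy.
      * eapply r_andE1, hyp0.
    + apply r_orI1. eapply r_exE; [apply hyp0|]. apply exI0.
      apply r_andI; [eapply r_andE1, hyp0|].
      eapply orE; [apply use_closed, IHdelta0| apply hyp0|].
      apply botE. eapply mp; [eapply r_andE2, hyp1| apply hyp0].
Qed.

Lemma ball_markov A t : delta0 A ->
  pv [] (fimp (fimp (fall (fimp (flt (tvar 0) (shift_term t)) A)) fbot)
              (fex (fand (flt (tvar 0) (shift_term t)) (fimp A fbot)))).
Proof.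
  intros HA. apply impI. eapply orE; [apply use_closed, bounded; [exact HA| apply dec0, HA]| |].
  - apply botE. eapply mp; [apply hyp1| apply hyp0].
  - apply hyp0.
Qed.


Definition nn (C X : form) : form := fimp (fimp X C) C.

Fixpoint N (C : form) (A : form) : form :=
  match A with
  | fbot => C
  | feq t u => nn C (feq t u)
  | flt t u => nn C (flt t u)
  | fand A B => fand (N C A) (N C B)
  | f_or A B => nn C (f_or (N C A) (N C B))
  | fimp A B => fimp (N C A) (N C B)
  | fall A => fall (N (shift C) A)
  | fex A => nn C (fex (N (shift C) A))
  end.

Lemma N_subst A : forall s C, subst s (N C A) = N (subst s C) (subst s A).
Proof.
  induction A; intros s C; simpl; try reflexivity;
  try (rewrite ?IHA1, ?IHA2; reflexivity).
  - rewrite IHA, up_shift_comm. reflexivity.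
  - rewrite IHA, up_shift_comm. reflexivity.
Qed.

Lemma nn_intro G C X : pv G X -> pv G (nn C X).
Proof. intros H. apply impI. eapply mp; [apply hyp0| apply wk, H]. Qed.

Lemma nn_stab C Y : pv [] (fimp (nn C (nn C Y)) (nn C Y)).
Proof.
  apply impI, impI. eapply mp; [apply hyp1|]. apply impI. eapply mp; [apply hyp0| apply hyp1].
Qed.

Lemma nn_map C X Y : pv [] (fimp X Y) -> pv [] (fimp (nn C X) (nn C Y)).
Proof.
  intros H. apply impI, impI. eapply mp; [apply hyp1|]. apply impI.
  eapply mp; [apply hyp1| eapply mpc; [exact H| apply hyp0]].
Qed.

Lemma C_N A : forall C, pv [] (fimp C (N C A)).
Proof.
  induction A; intros C; simpl.
  - apply impI, hyp0.
  - apply impI, impI, hyp1.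
  - apply impI, impI, hyp1.
  - apply impI, r_andI; [eapply mpc; [apply IHA1| apply hyp0]| eapply mpc; [apply IHA2| apply hyp0]].
  - apply impI, impI, hyp1.
  - apply impI, impI. eapply mpc; [apply IHA2| apply hyp1].
  - apply impI, r_allI. eapply mpc; [apply IHA| apply hyp0].
  - apply impI, impI, hyp1.
Qed.

Lemma stab A : forall C, pv [] (fimp (nn C (N C A)) (N C A)).
Proof.
  induction A; intros C; simpl; try apply nn_stab.
  - apply impI. eapply mp; [apply hyp0| apply impI, hyp0].
  - apply impI, r_andI.
    + eapply mpc; [apply IHA1| eapply mpc; [apply nn_map| apply hyp0]].
      apply impI. eapply r_andE1, hyp0.
    + eapply mpc; [apply IHA2| eapply mpc; [apply nn_map| apply hyp0]].
      apply impI. eapply r_andE2, hyp0.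
  - apply impI, impI. eapply mpc; [apply IHA2|]. apply impI.
    eapply mp; [apply hyp2|]. apply impI. eapply mp; [apply hyp1| eapply mp; [apply hyp0| apply hyp2]].
  - apply impI, r_allI. eapply mpc; [apply IHA|]. apply impI.
    apply (mp _ (shift (fimp (fall (N (shift C) A)) C))); [exact (hyp1 [] (shift (nn C (fall (N (shift C) A)))) _)|].
    apply impI. eapply mp; [apply hyp1|]. apply (allE0 _ (N (shift C) A)). apply hyp0.
Qed.


Lemma atom_case P C : pv [] (f_or P (fimp P fbot)) ->
  pv [] (fimp P (nn C P)) /\ pv [] (fimp (nn C P) (f_or P C)).
Proof.
  intros Hd; split.
  - apply impI, nn_intro, hyp0.
  - apply impI. eapply orE; [apply use_closed, Hd| |].
    + apply r_orI1, hyp0.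
    + apply r_orI2. eapply mp; [apply hyp1|]. apply impI, botE. eapply mp; [apply hyp1| apply hyp0].
Qed.

Lemma decG G A : delta0 A -> pv G (f_or A (fimp A fbot)).
Proof. intros H; apply use_closed, dec0, H. Qed.

Lemma d0N A : delta0 A -> forall C, pv [] (fimp A (N C A)) /\ pv [] (fimp (N C A) (f_or A C)).
Proof.
  induction 1; intros C; simpl.
  - split; [apply impI, botE, hyp0| apply impI, r_orI2, hyp0].
  - apply atom_case, dec_eq.
  - apply atom_case, dec_lt.
  - destruct (IHdelta0_1 C) as [f1 b1]; destruct (IHdelta0_2 C) as [f2 b2]. split.
    + apply impI, r_andI; [eapply mpc; [exact f1| eapply r_andE1, hyp0]| eapply mpc; [exact f2| eapply r_andE2, hyp0]].
    + apply impI. eapply orE; [eapply mpc; [exact b1| eapply r_andE1, hyp0]| |].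
      * eapply orE; [eapply mpc; [exact b2| eapply r_andE2, hyp1]| |].
        -- apply r_orI1, r_andI; [apply hyp1| apply hyp0].
        -- apply r_orI2, hyp0.
      * apply r_orI2, hyp0.
  - destruct (IHdelta0_1 C) as [f1 b1]; destruct (IHdelta0_2 C) as [f2 b2]. split.
    + apply impI, nn_intro. eapply orE; [apply hyp0| |].
      * apply r_orI1. eapply mpc; [exact f1| apply hyp0].
      * apply r_orI2. eapply mpc; [exact f2| apply hyp0].
    + apply impI. eapply orE; [apply (decG _ (f_or A B)); constructor; auto| |].
      * apply r_orI1, hyp0.
      * apply r_orI2. eapply mp; [apply hyp1|]. apply impI. eapply orE; [apply hyp0| |].
        -- eapply orE; [eapply mpc; [exact b1| apply hyp0]| |].
           ++ apply botE. eapply mp; [apply hyp3| apply r_orI1, hyp0].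
           ++ apply hyp0.
        -- eapply orE; [eapply mpc; [exact b2| apply hyp0]| |].
           ++ apply botE. eapply mp; [apply hyp3| apply r_orI2, hyp0].
           ++ apply hyp0.
  - destruct (IHdelta0_1 C) as [f1 b1]; destruct (IHdelta0_2 C) as [f2 b2]. split.
    + apply impI, impI. eapply orE; [eapply mpc; [exact b1| apply hyp0]| |].
      * eapply mpc; [exact f2|]. eapply mp; [apply hyp2| apply hyp0].
      * eapply mpc; [apply C_N| apply hyp0].
    + apply impI. eapply orE; [apply (decG _ A); exact H| |].
      * eapply orE; [eapply mpc; [exact b2|]; eapply mp; [apply hyp1| eapply mpc; [exact f1| apply hyp0]]| |].
        -- apply r_orI1, impI, hyp1.
        -- apply r_orI2, hyp0.
      * apply r_orI1, impI, botE. eapply mp; [apply hyp1| apply hyp0].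
  - destruct (IHdelta0 (shift C)) as [f1 b1]. split.
    + apply impI, r_allI, impI.
      eapply orE; [apply dec_lt| |].
      * eapply mpc; [exact f1|]. eapply mp; [| apply hyp0].
        apply (allE0 _ (fimp (flt (tvar 0) (shift_term t)) A)). hy.
      * eapply mpc; [apply C_N|]. eapply mp; [apply hyp1|]. apply impI, botE.
        eapply mp; [apply hyp1| apply hyp0].
    + apply impI. eapply orE; [apply (decG _ (fall (fimp (flt (tvar 0) (shift_term t)) A))); constructor; exact H| |].
      * apply r_orI1, hyp0.
      * apply r_orI2. eapply r_exE; [eapply mpc; [apply ball_markov; exact H| apply hyp0]|].
        eapply orE; [eapply mpc; [exact b1|] | |].
        -- eapply mp.
           ++ apply (allE0 _ (fimp (nn (shift C) (flt (tvar 0) (shift_term t))) (N (shift C) A))). hy.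
           ++ apply nn_intro. eapply r_andE1, hyp0.
        -- apply botE. eapply mp; [eapply r_andE2, hyp1| apply hyp0].
        -- apply hyp0.
  - destruct (IHdelta0 (shift C)) as [f1 b1]. split.
    + apply impI, nn_intro. eapply r_exE; [apply hyp0|]. apply exI0.
      apply r_andI; [apply nn_intro; eapply r_andE1, hyp0| eapply mpc; [exact f1| eapply r_andE2, hyp0]].
    + apply impI. eapply orE; [apply (decG _ (fex (fand (flt (tvar 0) (shift_term t)) A))); constructor; exact H| |].
      * apply r_orI1, hyp0.
      * apply r_orI2. eapply mp; [apply hyp1|]. apply impI. eapply r_exE; [apply hyp0|].
        eapply orE; [eapply mpc; [exact b1| eapply r_andE2, hyp0]| |].
        -- eapply orE; [apply dec_lt| |].
           ++ apply botE. eapply mp.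
              ** apply (r_hyp _ _ _ (shift (fimp (fex (fand (flt (tvar 0) (shift_term t)) A)) fbot))). simpl; intuition.
              ** apply exI0. apply r_andI; [apply hyp0| apply hyp1].
           ++ eapply mp; [eapply r_andE1, hyp2|]. apply impI, botE. eapply mp; [apply hyp1| apply hyp0].
        -- apply hyp0.
Qed.

Ltac wkn H := eapply weaken; [exact H| intros ?x ?Hx; simpl in *; intuition].

Lemma s1N D : sigma1 D -> forall C, pv [] (fimp D (N C D)) /\ pv [] (fimp (N C D) (nn C D)).
Proof.
  induction 1; intros C.
  - destruct (d0N A H C) as [f b]. split; [exact f|].
    apply impI, impI. eapply orE; [eapply mpc; [exact b| apply hyp1]| |].
    + eapply mp; [apply hyp1| apply hyp0].
    + apply hyp0.
  - destruct (IHsigma1 (shift C)) as [f b]. simpl. split.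
    + apply impI, nn_intro. eapply r_exE; [apply hyp0|]. apply exI0.
      eapply mpc; [exact f| apply hyp0].
    + apply impI, impI. eapply mp; [apply hyp1|]. apply impI.
      eapply r_exE; [apply hyp0|].
      eapply mp; [eapply mpc; [exact b| apply hyp0]|]. apply impI.
      eapply mp; [apply (r_hyp _ _ _ (shift (fimp (fex A) C))); simpl; intuition|].
      apply exI0, hyp0.
Qed.

Lemma disj_d0 E : sigma1 E -> forall D, delta0 D -> exists K, sigma1 K /\
  pv [] (fimp K (f_or D E)) /\ pv [] (fimp (f_or D E) K).
Proof.
  induction 1; intros D HD.
  - exists (f_or D A). split; [apply s1_d0; constructor; auto|]. split; apply impI, hyp0.
  - destruct (IHsigma1 (shift D) (delta0_subst _ HD _)) as [K [HK [k1 k2]]].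
    exists (fex K). split; [apply s1_ex, HK|]. split.
    + apply impI. eapply r_exE; [apply hyp0|].
      eapply orE; [eapply mpc; [exact k1| apply hyp0]| |].
      * apply r_orI1. apply hyp0.
      * apply r_orI2. apply exI0, hyp0.
    + apply impI. eapply orE; [apply hyp0| |].
      * apply r_exI with (t := tzero).
        eapply mp; [apply (use_open _ (scons tzero tvar) _ k2)|].
        apply r_orI1. change (pv (D :: f_or D (fex A) :: []) (inst (shift D) tzero)).
        rewrite inst_shift. apply hyp0.
      * eapply r_exE; [apply hyp0|]. apply exI0. eapply mpc; [exact k2| apply r_orI2, hyp0].
Qed.

Lemma disj D : sigma1 D -> forall E, sigma1 E -> exists K, sigma1 K /\
  pv [] (fimp K (f_or D E)) /\ pv [] (fimp (f_or D E) K).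
Proof.
  induction 1; intros E HE.
  - apply disj_d0; auto.
  - destruct (IHsigma1 (shift E) (sigma1_subst _ HE _)) as [K [HK [k1 k2]]].
    exists (fex K). split; [apply s1_ex, HK|]. split.
    + apply impI. eapply r_exE; [apply hyp0|].
      eapply orE; [eapply mpc; [exact k1| apply hyp0]| |].
      * apply r_orI1. apply exI0, hyp0.
      * apply r_orI2. apply hyp0.
    + apply impI. eapply orE; [apply hyp0| |].
      * eapply r_exE; [apply hyp0|]. apply exI0. eapply mpc; [exact k2| apply r_orI1, hyp0].
      * apply r_exI with (t := tzero).
        eapply mp; [apply (use_open _ (scons tzero tvar) _ k2)|].
        apply r_orI2. change (pv (E :: f_or (fex A) E :: []) (inst (shift E) tzero)).
        rewrite inst_shift. apply hyp0.
Qed.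

Lemma N_inst C A t : N C (inst A t) = inst (N (shift C) A) t.
Proof. unfold inst at 2. rewrite N_subst. fold (inst (shift C) t). rewrite inst_shift. reflexivity. Qed.

Lemma N_ind C F : N C (ind_ax F) = ind_ax (N (shift C) F).
Proof.
  unfold ind_ax. simpl. rewrite N_inst. f_equal. f_equal. f_equal. f_equal.
  rewrite N_subst. f_equal. unfold shift. rewrite subst_comp. apply subst_ext. reflexivity.
Qed.

Lemma transfer G H : pv [] (fimp G H) -> pv [] (fimp H G) -> pv [] (ind_ax H) -> pv [] (ind_ax G).
Proof.
  intros GH HG IH. unfold ind_ax. apply impI.
  assert (HH : pv [fand (inst G tzero) (fall (fimp G (subst sS G)))] (fall H)).
  { eapply mpc; [exact IH|]. apply r_andI.
    - eapply mp; [apply (use_open _ (scons tzero tvar) _ GH)| eapply r_andE1, hyp0].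
    - apply r_allI, impI. eapply mp; [apply (use_open _ sS _ GH)|].
      eapply mp; [| eapply mpc; [exact HG| apply hyp0]].
      apply (allE0 _ (fimp G (subst sS G))). eapply r_andE2. apply hyp1. }
  apply r_allI. eapply mpc; [exact HG|]. apply (allE0 _ H). apply (shift_pv _ (fall H)). exact HH.
Qed.

Lemma ind_tr C D E : sigma1 C -> sigma1 D -> sigma1 E -> pv [] (N C (ind_ax (fimp (fimp D E) E))).
Proof.
  intros HC HD HE. rewrite N_ind. set (c := shift C).
  assert (Hc : sigma1 c) by (apply sigma1_subst; auto).
  destruct (disj D HD E HE) as [K [HK [k1 k2]]].
  pose proof (ax_inst [] _ tvar (ha0_ind K c HK Hc)) as Hax. rewrite subst_id in Hax.
  destruct (s1N D HD c) as [fD bD]. destruct (s1N E HE c) as [fE bE].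
  pose proof (stab E c) as stE. pose proof (C_N E c) as cE.
  apply (transfer (N c (fimp (fimp D E) E)) (fimp (fimp K c) c)); [simpl| simpl |exact Hax].
  - apply impI, impI. eapply mp; [eapply mpc; [exact bE|]|].
    + eapply mp; [apply hyp1|]. apply impI. eapply mpc; [exact cE|].
      eapply mp; [eapply mpc; [exact bD| apply hyp0]|]. apply impI.
      eapply mp; [apply hyp2| eapply mpc; [exact k2| apply r_orI1, hyp0]].
    + apply impI. eapply mp; [apply hyp1| eapply mpc; [exact k2| apply r_orI2, hyp0]].
  - apply impI, impI. eapply mpc; [exact stE|]. apply impI.
    eapply mp; [apply hyp2|]. apply impI.
    eapply orE; [eapply mpc; [exact k1| apply hyp0]| |].
    + eapply mp; [apply hyp2| eapply mp; [apply hyp3| eapply mpc; [exact fD| apply hyp0]]].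
    + eapply mp; [apply hyp2| eapply mpc; [exact fE| apply hyp0]].
Qed.

Lemma subst_ind s F : subst s (ind_ax F) = ind_ax (subst (up s) F).
Proof.
  unfold ind_ax. simpl. rewrite subst_inst. f_equal. f_equal. f_equal. f_equal.
  rewrite !subst_comp. apply subst_ext. intros [|n]; simpl; [reflexivity|].
  rewrite subst_term_shift, shift_term_subst. reflexivity.
Qed.

Lemma basic_d0 A : basic_ax A -> delta0 A.
Proof. destruct 1; repeat constructor. Qed.

Lemma map_N_shift C G : map (N (shift C)) (map shift G) = map shift (map (N C) G).
Proof. rewrite !map_map. apply map_ext. intro B. unfold shift at 3. rewrite N_subst. reflexivity. Qed.

Lemma N_shift C B : N (shift C) (shift B) = shift (N C B).
Proof. unfold shift at 3. rewrite N_subst. reflexivity. Qed.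

Theorem trans G A : prf true HA0_ax G A -> forall C, sigma1 C -> pv (map (N C) G) (N C A).
Proof.
  induction 1; intros Cf HC.
  - apply r_hyp, in_map, H.
  - destruct H as [A Hb | D E HD HE].
    + destruct (d0N _ (delta0_subst _ (basic_d0 _ Hb) s) Cf) as [f _].
      eapply mpc; [exact f| apply ax_inst, ha0_basic, Hb].
    + rewrite subst_ind. simpl. apply use_closed, ind_tr; auto; apply sigma1_subst; auto.
  - simpl. apply r_impI. apply (IHprf Cf HC).
  - eapply mp; [apply (IHprf1 Cf HC)| apply (IHprf2 Cf HC)].
  - apply r_andI; [apply (IHprf1 Cf HC)| apply (IHprf2 Cf HC)].
  - eapply r_andE1, (IHprf Cf HC).
  - eapply r_andE2, (IHprf Cf HC).
  - simpl. apply nn_intro, r_orI1, (IHprf Cf HC).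
  - simpl. apply nn_intro, r_orI2, (IHprf Cf HC).
  - eapply mpc; [apply stab|]. apply impI. eapply mp; [apply wk, (IHprf1 Cf HC)|].
    apply impI. eapply orE; [apply hyp0| |].
    + eapply mp; [apply hyp2|]. pose proof (IHprf2 Cf HC) as X. wkn X.
    + eapply mp; [apply hyp2|]. pose proof (IHprf3 Cf HC) as X. wkn X.
  - eapply mpc; [apply C_N| apply (IHprf Cf HC)].
  - simpl. apply r_allI. rewrite <- map_N_shift. apply IHprf. apply sigma1_subst; auto.
  - rewrite N_inst. apply r_allE. apply (IHprf Cf HC).
  - simpl. apply nn_intro. eapply r_exI. rewrite <- N_inst. apply (IHprf Cf HC).
  - eapply mpc; [apply stab|]. apply impI. eapply mp; [apply wk, (IHprf1 Cf HC)|].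
    apply impI. eapply r_exE; [apply hyp0|].
    eapply mp; [apply (r_hyp _ _ _ (shift (fimp (N Cf B) Cf))); simpl; intuition|].
    pose proof (IHprf2 (shift Cf) (sigma1_subst _ HC _)) as X.
    cbn [map] in X. rewrite map_N_shift, N_shift in X. wkn X.
  - simpl. apply nn_intro, r_eqrefl.
  - eapply mpc; [apply stab|]. apply impI. eapply mp; [apply wk, (IHprf1 Cf HC)|].
    apply impI. eapply mp; [apply hyp1|]. rewrite N_inst. eapply r_eqelim; [apply hyp0|].
    pose proof (IHprf2 Cf HC) as X. rewrite N_inst in X. wkn X.
  - eapply mpc; [apply stab| apply (IHprf Cf HC)].
Qed.

Lemma part1 A : sigma1 A -> PA0_proves A -> HA0_proves A.
Proof.
  intros HA HP. pose proof (trans _ _ HP A HA) as X. simpl in X.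
  destruct (s1N A HA A) as [_ b].
  eapply mp; [eapply mpc; [exact b| exact X]| apply impI, hyp0].
Qed.

Lemma part2 A : pi2 A -> PA0_proves A -> HA0_proves A.
Proof.
  induction 1; intros HP.
  - apply part1; auto.
  - assert (PA0_proves A).
    { pose proof (prf_subst _ _ _ _ HP sh) as X. simpl in X.
      pose proof (r_allE _ _ _ _ (tvar 0) X) as Y. rewrite inst_up_sh in Y. exact Y. }
    apply r_allI. apply IHpi2. exact H0.
Qed.

Theorem lemma3p4 :
  (forall A : form, sigma1 A -> PA0_proves A -> HA0_proves A) /\
  (forall A : form, pi2 A -> sentence A -> PA0_proves A -> HA0_proves A).
Proof.
  split.
  - exact part1.
  - intros A HA _ HP. apply part2; auto.
Qed.
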